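(* Let $n\ge 3$ and let $G$ be a graph on $2n$ vertices with at least $n^2-1$ edges that contains no two distinct vertices of the same degree joined by a path of length three. Let $\beta$ be the largest integer such that $G$ contains two distinct vertices of degree $\beta$, and let $\Delta$ be the maximum degree of $G$. Then $3\le\beta\le\Delta$.
   Context: A path of length three joining vertices $a$ and $b$ is a path $a\,x\,y\,b$ with four distinct vertices and three edges. Graphs are finite and simple. *)

(* Defs.v *)
From mathcomp Require Import all_boot.
Set Implicit Arguments. Unset Strict Implicit. Unset Printing Implicit Defensive.

Section Graphs.
Variable T : finType.

Definition simple_graph (e : rel T) : Prop := symmetric e /\ irreflexive e.

Definition deg (e : rel T) (v : T) : nat := #|[set u | e v u]|.

Definition edges (e : rel T) : {set {set T}} :=
  [set E : {set T} | [exists u, exists v, e u v && (E == [set u; v])]].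

Definition nedges (e : rel T) : nat := #|edges e|.

Definition path3 (e : rel T) (a b : T) : Prop :=
  exists x y : T, uniq [:: a; x; y; b] /\ e a x /\ e x y /\ e y b.

Definition maxdeg (e : rel T) : nat := \max_(v : T) deg e v.
End Graphs.

(* Main.v *)
Require Import Defs.
From mathcomp Require Import all_boot zify.
Set Implicit Arguments. Unset Strict Implicit. Unset Printing Implicit Defensive.

Lemma sub_sum (I : finType) (P Q : pred I) (F : I -> nat) :
  (forall i, P i -> Q i) -> \sum_(i | P i) F i <= \sum_(i | Q i) F i.
Proof.
move=> PQ; rewrite [X in _ <= X]big_mkcond [X in X <= _]big_mkcond /=.
apply: leq_sum => i _; case Pi: (P i); first by rewrite (PQ i Pi).
by case: (Q i).
Qed.

Lemma sum_sub c k : 2 * \sum_(i < k) (i - c) = (k - c) * (k - c).-1.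
Proof.
elim: k => [|k IH]; first by rewrite big_ord0.
rewrite big_ord_recr /= mulnDr IH.
case: (leqP c k) => h.
  have -> : k.+1 - c = (k - c).+1 by lia.
  case: (k - c) => [|j] /=; lia.
have -> : k.+1 - c = 0 by lia.
have -> : k - c = 0 by lia.
by [].
Qed.

Lemma sum_gt c k : \sum_(i < k) (c < i : nat) = k - c.+1.
Proof.
elim: k => [|k IH]; first by rewrite big_ord0.
rewrite big_ord_recr /= IH.
case: (ltnP c k) => h /=; lia.
Qed.

Lemma sum_but (N m : nat) (F : nat -> nat) : m < N ->
  \sum_(i < N | (i:nat) != m) F i + F m = \sum_(i < N) F i.
Proof.
move=> mN; rewrite [RHS](bigD1 (Ordinal mN)) //= [RHS]addnC; congr (_ + _).
Qed.

Lemma Klem (T : finType) (d : T -> nat) N (P : pred nat) (g : nat -> nat) :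
  (forall v, d v < N) -> (forall u v, u != v -> d u = d v -> d u <= 2) ->
  (forall v, 2 < d v -> P (d v)) ->
  \sum_(v | 2 < d v) g (d v) <= \sum_(i < N | P i) g i.
Proof.
move=> dlt B HP.
pose o v := Ordinal (dlt v).
have inj : {in [pred v | 2 < d v] &, injective o}.
  move=> u v; rewrite !inE => hu hv /(congr1 val) /= huv.
  apply/eqP; apply/negPn/negP => neq; have := B u v neq huv; lia.
have -> : \sum_(v | 2 < d v) g (d v) = \sum_(v in [pred v | 2 < d v]) g (val (o v)).
  by apply: eq_bigl => v; rewrite inE.
rewrite -(big_imset (fun j : 'I_N => g j) inj).
apply: sub_sum => j /imsetP [v]; rewrite inE => hv ->; exact: HP.
Qed.

Lemma handshake (T : finType) (e : rel T) : symmetric e -> irreflexive e ->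
  2 * nedges e <= \sum_v deg e v.
Proof.
move=> esym eirr.
have E1 : \sum_v deg e v = \sum_(p : T * T | e p.1 p.2) 1.
  rewrite -(pair_big_dep xpredT (fun i j => e i j) (fun _ _ => 1)) /=.
  apply: eq_bigr => v _; rewrite /deg -sum1_card; apply: eq_bigl => u.
  by rewrite inE.
rewrite E1 (partition_big (fun p : T * T => [set p.1; p.2]) (fun E => E \in edges e)) /=; last first.
  move=> p hp; rewrite inE; apply/existsP; exists p.1; apply/existsP; exists p.2.
  by rewrite hp eqxx.
rewrite /nedges mulnC -sum_nat_const; apply: leq_sum => E.
rewrite inE => /existsP [a /existsP [b /andP [hab /eqP ->]]].
have ab : a != b by apply/eqP => h; subst; rewrite eirr in hab.
rewrite (bigD1 (a, b)) /=; last by rewrite hab eqxx.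
rewrite (bigD1 (b, a)) /=; last first.
  rewrite (esym b a) hab setUC eqxx /=; apply/negP => /eqP [h _].
  by rewrite h eqxx in ab.
by [].
Qed.

Unset Implicit Arguments.
Theorem lemma3p2 (n : nat) (T : finType) (e : rel T) :
  3 <= n ->
  simple_graph e ->
  #|T| = 2 * n ->
  n ^ 2 - 1 <= nedges e ->
  (forall a b : T, a != b -> deg e a = deg e b -> ~ path3 e a b) ->
  forall beta : nat,
    (exists u v : T, u != v /\ deg e u = beta /\ deg e v = beta) ->
    (forall u v : T, u != v -> deg e u = deg e v -> deg e u <= beta) ->
    3 <= beta <= maxdeg e.
Proof.
move=> n3 [esym eirr] cardT hm hp beta [u0 [v0 [uv [du dv]]]] hmax.
have -> : beta <= maxdeg e by rewrite -du /maxdeg; exact: (@leq_bigmax T (fun v => deg e v) u0).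
rewrite andbT leqNgt; apply/negP => hb.
have B : forall a b, a != b -> deg e a = deg e b -> deg e a <= 2.
  by move=> a b ab h; have := hmax a b ab h; lia.
have dlt : forall v, deg e v < 2 * n.
  move=> v; rewrite -cardT.
  have : [set u | e v u] \subset [set~ v].
    apply/subsetP => x; rewrite !inE => h; apply/eqP => xv; subst.
    by rewrite eirr in h.
  move/subset_leq_card; rewrite cardsC1 /deg.
  have : 0 < #|T| by rewrite cardT; lia.
  lia.
have hs := handshake esym eirr.
rewrite -mulnn in hm.
have hsum : 2 * (n * n - 1) <= \sum_v deg e v by lia.
case: (boolP [exists z, deg e z == 2 * n - 1]); last first.
  move=> noz.
  have h1 : \sum_v deg e v <= \sum_(v : T) 2 + \sum_(v | 2 < deg e v) (deg e v - 2).
    rewrite [\sum_(v | 2 < deg e v) _]big_mkcond -big_split /=.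
    apply: leq_sum => v _; case: ltnP => h; lia.
  have h2 : \sum_(v | 2 < deg e v) (deg e v - 2) <=
            \sum_(i < 2 * n | (i:nat) != 2 * n - 1) (i - 2).
    apply: (Klem (P := fun i => i != 2 * n - 1) (fun i => i - 2) dlt B) => v _.
    by apply/negP => /eqP h; move/negP: noz; apply; apply/existsP; exists v; rewrite h.
  have h3 := sum_but (fun i => i - 2) (_ : 2 * n - 1 < 2 * n).
  have h4 := sum_sub 2 (2 * n).
  rewrite sum_nat_const cardT /= in h1.
  have : 2 * n - 1 < 2 * n by lia.
  move/h3 => {}h3.
  nia.
move=> /existsP [z /eqP dz].
have adjz : forall x, x != z -> e z x.
  have sub : [set u | e z u] \subset [set~ z].
    apply/subsetP => x; rewrite !inE => h; apply/eqP => xv; subst.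
    by rewrite eirr in h.
  have : [set u | e z u] == [set~ z].
    rewrite eqEcard sub cardsC1 cardT /=; have := dz; rewrite /deg; lia.
  move/eqP => E x xz.
  have : x \in [set~ z] by rewrite in_setC1.
  by rewrite -E inE.
have C : forall a b x, a != b -> deg e a = deg e b -> a != z -> b != z ->
    e a x -> x = z \/ x = b.
  move=> a b x ab dab az bz hax.
  case: (eqVneq x z) => [->|xz]; first by left.
  case: (eqVneq x b) => [->|xb]; first by right.
  exfalso; apply: (hp a b ab dab); exists x, z; split; last split.
  - rewrite /= !inE negb_or.
    have ax : a != x by apply/eqP => h; subst; rewrite eirr in hax.
    by rewrite ax negb_or az ab negb_or xz xb eq_sym bz.
  - exact: hax.
  - split; first by rewrite esym; apply: adjz.
    exact: adjz bz.
have dz2 : forall v, deg e v <= 2 * n - 3 -> v != z.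
  by move=> v h; apply/eqP => vz; subst; rewrite dz in h; lia.
have L2 : #|[set v | deg e v == 2]| <= 2.
  case: (set_0Vmem [set v | deg e v == 2]) => [->|[a ha]]; first by rewrite cards0.
  rewrite (cardsD1 a) ha.
  move: (ha); rewrite inE => /eqP da.
  have az : a != z by apply: dz2; lia.
  have zin : z \in [set u | e a u] by rewrite inE esym adjz.
  have : #|[set u | e a u] :\ z| <= 1.
    move: da; rewrite /deg (cardsD1 z) zin; lia.
  suff : [set v | deg e v == 2] :\ a \subset [set u | e a u] :\ z.
    move/subset_leq_card; lia.
  apply/subsetP => b; rewrite !inE => /andP [ba /eqP db].
  have bz : b != z by apply: dz2; lia.
  rewrite bz /=; apply/negPn/negP => nab.
  have : [set u | e a u] \subset [set z].
    apply/subsetP => x; rewrite !inE => hax.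
    have ab' : a != b by rewrite eq_sym.
    have dab : deg e a = deg e b by rewrite da db.
    have [->|xb] := C a b x ab' dab az bz hax.
      by [].
    by subst; rewrite hax in nab.
  move/subset_leq_card; rewrite cards1; move: da; rewrite /deg; lia.
case: (boolP [exists y, deg e y == 2 * n - 2]); last first.
  move=> noy.
  have h1 : \sum_v deg e v <= \sum_(v : T) 1 + \sum_v (deg e v == 2 : nat)
             + \sum_(v | 2 < deg e v) (deg e v - 1).
    rewrite [\sum_(v | 2 < deg e v) _]big_mkcond -!big_split /=.
    apply: leq_sum => v _; case: ltnP => h1; case: eqP => h2 /=; lia.
  have h2 : \sum_(v | 2 < deg e v) (deg e v - 1) <=
            \sum_(i < 2 * n | (i:nat) != 2 * n - 2) (i - 1).
    apply: (Klem (P := fun i => i != 2 * n - 2) (fun i => i - 1) dlt B) => v _.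
    by apply/negP => /eqP h; move/negP: noy; apply; apply/existsP; exists v; rewrite h.
  have h3 := sum_but (fun i => i - 1) (_ : 2 * n - 2 < 2 * n).
  have h4 := sum_sub 1 (2 * n).
  have h5 : \sum_v (deg e v == 2 : nat) = #|[set v | deg e v == 2]|.
    rewrite -sum1_card [RHS]big_mkcond /=; apply: eq_bigr => v _; rewrite inE.
    by case: eqP.
  rewrite sum_nat_const cardT /= h5 in h1.
  have : 2 * n - 2 < 2 * n by lia.
  move/h3 => {}h3.
  nia.
move=> /existsP [y /eqP dy].
have yz : y != z by apply/eqP => h; subst; rewrite dz in dy; lia.
pose M := [set~ y] :\: [set u | e y u].
have M1 : #|M| <= 1.
  have sub : [set u | e y u] \subset [set~ y].
    apply/subsetP => x; rewrite !inE => h; apply/eqP => xv; subst.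
    by rewrite eirr in h.
  rewrite /M cardsD (setIidPr sub) cardsC1 cardT; move: dy; rewrite /deg; lia.
pose L := [set v | deg e v <= 2].
have LL : #|L| <= 2.
  rewrite -(cardsID M L).
  have : #|L :&: M| <= 1 by apply: leq_trans M1; apply: subset_leq_card; apply: subsetIr.
  suff : #|L :\: M| <= 1 by lia.
  apply/card_le1_eqP => a b; rewrite !inE => /andP [aM da] /andP [bM db].
  apply/eqP; apply/negPn/negP => ab.
  have az : a != z by apply: dz2; lia.
  have bz : b != z by apply: dz2; lia.
  have ay : a != y by apply/eqP => h; subst; rewrite dy in da; lia.
  have by_ : b != y by apply/eqP => h; subst; rewrite dy in db; lia.
  rewrite ay andbT negbK in aM; rewrite by_ andbT negbK in bM.
  have d2 : forall c, c != z -> e y c -> deg e c <= 2 -> deg e c = 2.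
    move=> c cz hyc hc.
    have : [set z; y] \subset [set u | e c u].
      apply/subsetP => x; rewrite !inE => /orP [/eqP ->|/eqP ->].
        by rewrite esym adjz.
      by rewrite esym.
    move/subset_leq_card; rewrite cards2 eq_sym yz /deg; move: hc; rewrite /deg; lia.
  have da2 : deg e a = 2 by apply: d2.
  have db2 : deg e b = 2 by apply: d2.
  have dab : deg e a = deg e b by rewrite da2 db2.
  have eay : e a y by rewrite esym.
  have ab2 : a != b by rewrite eq_sym.
  have [h|h] := C a b y ab2 dab az bz eay.
    by rewrite h eqxx in yz.
  by rewrite h eqxx in by_.
have hK : \sum_(v | 2 < deg e v) (2 < deg e v : nat) <= \sum_(i < 2 * n | true) (2 < i : nat).
  exact: (Klem (P := predT) (fun i => (2 < i : nat)) dlt B).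
rewrite sum_gt in hK.
have e1 : #|L| = \sum_(v | deg e v <= 2) 1.
  by rewrite -sum1_card; apply: eq_bigl => v; rewrite inE.
have e2 : #|T| = \sum_(v : T) 1 by rewrite sum1_card.
have : \sum_(v | 2 < deg e v) (2 < deg e v : nat) + #|L| = #|T|.
  rewrite e1 e2 [X in X + _ = _]big_mkcond [X in _ + X = _]big_mkcond -big_split /=.
  apply: eq_bigr => v _; case: ltnP => //= _.
lia.
Qed.
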